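(* The function $t\mapsto \frac1t-M(t)$ is positive and decreasing on $(0,\infty)$.
   Context: For $t>0$, $M(t)=\int_0^\infty \frac{e^{-tu}}{\sqrt{u^2+1}}\,du$. *)

(* Defs.v *)
From Stdlib Require Import Reals.
From Coquelicot Require Import Coquelicot.
Open Scope R_scope.

Definition M (t : R) : R :=
  RInt_gen (fun u => exp (- t * u) / sqrt (u ^ 2 + 1))
           (at_point 0) (Rbar_locally p_infty).

(* Main.v *)
Require Import Defs.
From Stdlib Require Import Reals Lra.
From Coquelicot Require Import Coquelicot.
Open Scope R_scope.

Lemma gen_of_lim (f : R -> R) (l : R) :
  (forall b, ex_RInt f 0 b) ->
  is_lim (fun b => RInt f 0 b) p_infty l ->
  is_RInt_gen f (at_point 0) (Rbar_locally p_infty) l.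
Proof.
  intros Hex Hl P HP.
  destruct (Hl P HP) as [M HM].
  exists (fun a => a = 0) (fun b => M < b).
  - unfold at_point; reflexivity.
  - exists M; auto.
  - intros a b Ha Hb; simpl; subst a.
    exists (RInt f 0 b); split; [exact (RInt_correct f 0 b (Hex b)) | exact (HM b Hb)].
Qed.

Lemma mono_le_lim (G : R -> R) (L : R) :
  (forall x y, 0 <= x -> x <= y -> G x <= G y) ->
  is_lim G p_infty L -> forall x, 0 <= x -> G x <= L.
Proof.
  intros Hm Hl x Hx.
  destruct (Rle_or_lt (G x) L) as [H|H]; auto.
  assert (He : 0 < G x - L) by lra.
  destruct (Hl (fun y => Rabs (y - L) < G x - L)) as [M HM].
  { exists (mkposreal _ He). intros y Hy. exact Hy. }
  set (b := Rmax (M + 1) x).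
  assert (Hb1 : M < b) by (unfold b; generalize (Rmax_l (M+1) x); lra).
  assert (Hb2 : x <= b) by apply Rmax_r.
  specialize (HM b Hb1). specialize (Hm x b Hx Hb2).
  apply Rabs_def2 in HM. lra.
Qed.

Lemma mono_conv (G : R -> R) (B : R) :
  (forall x y, 0 <= x -> x <= y -> G x <= G y) ->
  (forall x, 0 <= x -> G x <= B) ->
  exists L : R, is_lim G p_infty L.
Proof.
  intros Hm HB.
  set (E := fun z => exists x, 0 <= x /\ z = G x).
  assert (Hb : bound E) by (exists B; intros z [x [Hx ->]]; auto).
  assert (Hne : exists z, E z) by (exists (G 0); exists 0; split; [lra|auto]).
  destruct (completeness E Hb Hne) as [L [Hub Hlub]].
  exists L. intros P [eps HP].
  assert (Hlt : ~ is_upper_bound E (L - eps)).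
  { intro H. specialize (Hlub _ H). destruct eps; simpl in *; lra. }
  apply Classical_Pred_Type.not_all_ex_not in Hlt as [z Hz].
  apply Classical_Prop.imply_to_and in Hz as [[x0 [Hx0 ->]] Hz].
  exists (Rmax x0 0). intros y Hy.
  apply HP.
  assert (Hy0 : 0 <= y) by (generalize (Rmax_r x0 0); lra).
  assert (G x0 <= G y) by (apply Hm; auto; generalize (Rmax_l x0 0); lra).
  assert (G y <= L) by (apply Hub; exists y; auto).
  change (Rabs (G y - L) < eps). apply Rabs_def1; destruct eps; simpl in *; lra.
Qed.

Lemma cder (g : R -> R) x : ex_derive g x -> continuous g x.
Proof. intro H. exact (@ex_derive_continuous R_AbsRing R_NormedModule g x H). Qed.

Lemma ex_cont (k : R -> R) : (forall u, continuous k u) -> forall a b, ex_RInt k a b.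
Proof. intros Hk a b; apply (@ex_RInt_continuous R_CompleteNormedModule); intros; apply Hk. Qed.

Lemma mono_int (k : R -> R) :
  (forall u, continuous k u) -> (forall u, 0 <= u -> 0 <= k u) ->
  forall x y, 0 <= x -> x <= y -> RInt k 0 x <= RInt k 0 y.
Proof.
  intros Hk Hp x y Hx Hxy.
  rewrite <- (RInt_Chasles k 0 x y) by (apply ex_cont; auto).
  change (plus ?a ?b) with (a + b).
  assert (0 <= RInt k x y); [|lra].
  apply RInt_ge_0; auto. apply ex_cont; auto. intros; apply Hp; lra.
Qed.

Lemma exp_lim t : 0 < t -> is_lim (fun b => (1 - exp (- t * b)) / t) p_infty (1 / t).
Proof.
  intros Ht P [eps HP].
  exists (- ln (eps * t) / t). intros b Hb. apply HP.
  change (Rabs ((1 - exp (- t * b)) / t - 1 / t) < eps).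
  assert (He : 0 < eps * t) by (destruct eps; simpl; nra).
  assert (H1 : - t * b < ln (eps * t)).
  { apply (Rmult_lt_compat_l t) in Hb; auto. field_simplify in Hb; lra. }
  apply exp_increasing in H1. rewrite exp_ln in H1 by auto.
  replace ((1 - exp (- t * b)) / t - 1 / t) with (- (exp (- t * b) / t)) by (field; lra).
  rewrite Rabs_Ropp, Rabs_right.
  - apply (Rmult_lt_reg_r t); auto. field_simplify; lra.
  - apply Rle_ge, Rdiv_le_0_compat; [left; apply exp_pos| lra].
Qed.

Lemma int_exp t b : 0 < t -> RInt (fun u => exp (- t * u)) 0 b = (1 - exp (- t * b)) / t.
Proof.
  intros Ht.
  apply is_RInt_unique.
  replace ((1 - exp (- t * b)) / t) with (minus ((fun u => - exp (- t * u) / t) b) ((fun u => - exp (- t * u) / t) 0)).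
  2:{ unfold minus, plus, opp; simpl. replace (-t*0) with 0 by ring. rewrite exp_0. field; lra. }
  apply (@is_RInt_derive R_CompleteNormedModule (fun u => - exp (- t * u) / t)).
  - intros x _. auto_derive; auto. field; lra.
  - intros x _. apply cder. auto_derive; auto.
Qed.

Definition ee (t : R) := fun u : R => exp (- t * u).
Definition ff (t : R) := fun u : R => exp (- t * u) / sqrt (u ^ 2 + 1).
Definition hh (t : R) := fun u : R => exp (- t * u) - exp (- t * u) / sqrt (u ^ 2 + 1).

Lemma ee_c t u : continuous (ee t) u.
Proof. apply cder. unfold ee. auto_derive. exact I. Qed.
Lemma ff_c t u : continuous (ff t) u.
Proof. apply cder. unfold ff. auto_derive. repeat split; try exact I; try nra; try (apply Rgt_not_eq, sqrt_lt_R0; nra). Qed.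
Lemma hh_c t u : continuous (hh t) u.
Proof. apply cder. unfold hh. auto_derive. repeat split; try exact I; try nra; try (apply Rgt_not_eq, sqrt_lt_R0; nra). Qed.

Lemma sq_ge1 u : 1 <= sqrt (u ^ 2 + 1).
Proof. rewrite <- sqrt_1 at 1. apply sqrt_le_1_alt. nra. Qed.
Lemma sq_gt1 u : 0 < u -> 1 < sqrt (u ^ 2 + 1).
Proof. intro. rewrite <- sqrt_1 at 1. apply sqrt_lt_1_alt. nra. Qed.

Lemma hh_eq t u : hh t u = exp (- t * u) * (1 - 1 / sqrt (u ^ 2 + 1)).
Proof. unfold hh. generalize (sq_ge1 u); intro. field. lra. Qed.

Lemma g_ge0 u : 0 <= 1 - 1 / sqrt (u ^ 2 + 1).
Proof. generalize (sq_ge1 u); intro.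
  assert (1 / sqrt (u ^ 2 + 1) <= 1); [|lra].
  unfold Rdiv; rewrite Rmult_1_l. assert (H1 : / sqrt (u ^ 2 + 1) <= / 1) by (apply Rinv_le_contravar; lra). rewrite Rinv_1 in H1. lra. Qed.
Lemma g_gt0 u : 0 < u -> 0 < 1 - 1 / sqrt (u ^ 2 + 1).
Proof. intro Hu. generalize (sq_gt1 u Hu); intro.
  assert (1 / sqrt (u ^ 2 + 1) < 1); [|lra].
  unfold Rdiv; rewrite Rmult_1_l. assert (H1 : / sqrt (u ^ 2 + 1) < / 1) by (apply Rinv_lt_contravar; lra). rewrite Rinv_1 in H1. lra. Qed.

Lemma hh_ge0 t u : 0 <= hh t u.
Proof. rewrite hh_eq. apply Rmult_le_pos; [left; apply exp_pos| apply g_ge0]. Qed.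
Lemma hh_le t u : hh t u <= ee t u.
Proof. rewrite hh_eq. unfold ee. generalize (exp_pos (-t*u)) (g_ge0 u); intros.
  assert (1 / sqrt (u ^ 2 + 1) > 0) by (apply Rdiv_lt_0_compat; [lra| generalize (sq_ge1 u); lra]).
  nra. Qed.

Lemma key t : 0 < t -> exists N : R, is_lim (fun b => RInt (hh t) 0 b) p_infty N /\ M t = 1 / t - N.
Proof.
  intros Ht.
  destruct (mono_conv (fun b => RInt (hh t) 0 b) (1 / t)) as [N HN].
  - apply mono_int; [apply hh_c | intros; apply hh_ge0].
  - intros x Hx.
    apply Rle_trans with (RInt (ee t) 0 x).
    + apply RInt_le; auto; try (apply ex_cont; intros; first [apply hh_c|apply ee_c]).
      intros; apply hh_le.
    + unfold ee. rewrite int_exp by auto.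
      generalize (exp_pos (- t * x)); intro.
      apply (Rmult_le_reg_r t); auto. field_simplify; lra.
  - exists N; split; [exact HN|].
    unfold M.
    apply is_RInt_gen_unique.
    apply gen_of_lim.
    + apply ex_cont. apply ff_c.
    + apply is_lim_ext with (fun b => (1 - exp (- t * b)) / t - RInt (hh t) 0 b).
      * intros b. rewrite <- int_exp by auto.
        change (RInt (ee t) 0 b - RInt (hh t) 0 b = RInt (ff t) 0 b).
        transitivity (RInt (fun x => minus (ee t x) (hh t x)) 0 b).
        -- rewrite (@RInt_minus R_CompleteNormedModule) by (apply ex_cont; intros; first [apply hh_c|apply ee_c]). reflexivity.
        -- apply RInt_ext. intros x _. unfold minus, plus, opp; simpl. unfold ee, hh, ff. ring.
      * apply is_lim_minus'; auto. apply exp_lim; auto.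
Qed.

Theorem proposition2 :
  (forall t : R, 0 < t -> 0 < 1 / t - M t) /\
  (forall s t : R, 0 < s -> s < t -> 1 / t - M t < 1 / s - M s).
Proof.
  split.
  - intros t Ht. destruct (key t Ht) as [N [HN HM]]. rewrite HM.
    assert (0 < N); [|lra].
    apply Rlt_le_trans with (RInt (hh t) 0 1).
    + apply RInt_gt_0; [lra| |intros; apply hh_c].
      intros x Hx. rewrite hh_eq. apply Rmult_lt_0_compat; [apply exp_pos|apply g_gt0; lra].
    + apply (mono_le_lim (fun b => RInt (hh t) 0 b)); auto; try lra.
      apply mono_int; [apply hh_c | intros; apply hh_ge0].
  - intros s t Hs Hst.
    destruct (key t ltac:(lra)) as [Nt [HNt HMt]].
    destruct (key s Hs) as [Ns [HNs HMs]]. rewrite HMt, HMs.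
    assert (0 < Ns - Nt); [|lra].
    set (k := fun u => hh s u - hh t u).
    assert (Hkc : forall u, continuous k u).
    { intro u. apply cder. unfold k, hh. auto_derive. repeat split; try exact I; try nra; try (apply Rgt_not_eq, sqrt_lt_R0; nra). }
    assert (Hk : forall u, 0 < u -> 0 < k u).
    { intros u Hu. unfold k. rewrite !hh_eq.
      assert (exp (- t * u) < exp (- s * u)) by (apply exp_increasing; nra).
      generalize (g_gt0 u Hu); intro. nra. }
    assert (HkR : forall b, RInt k 0 b = RInt (hh s) 0 b - RInt (hh t) 0 b).
    { intro b. transitivity (RInt (fun x => minus (hh s x) (hh t x)) 0 b).
      - apply RInt_ext. intros. reflexivity.
      - rewrite (@RInt_minus R_CompleteNormedModule) by (apply ex_cont; intros; apply hh_c). reflexivity. }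
    apply Rlt_le_trans with (RInt k 0 1).
    + apply RInt_gt_0; [lra| |intros; apply Hkc].
      intros x Hx. apply Hk; lra.
    + apply (mono_le_lim (fun b => RInt k 0 b)); auto; try lra.
      * apply mono_int; auto. intros u Hu. destruct Hu as [Hu| <-]; [left; auto|].
        unfold k, hh. replace (- s * 0) with 0 by ring. replace (- t * 0) with 0 by ring. lra.
      * apply is_lim_ext with (fun b => RInt (hh s) 0 b - RInt (hh t) 0 b).
        -- intros; symmetry; apply HkR.
        -- apply is_lim_minus'; auto.
Qed.
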